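(* Let $W\subset S$ be a one-dimensional $\mathbb{F}_q$-subspace and $\lambda,\mu$ partitions. Then $$T_{\lambda/\mu}(W)=\begin{cases}(-1)^{|\lambda|-|\mu|}\prod_{s\in\lambda/\mu}\varphi^{c(s)}E_1(W)&\text{if }\mu\subseteq\lambda\text{ and }\lambda/\mu\text{ is a vertical strip},\\ 0&\text{otherwise,}\end{cases}$$ where for a box $s=(i,j)$ (row $i$, column $j$) the content is $c(s)=j-i$.
   Context: Let $q$ be a power of a prime $p$, $S=\mathbb{F}_q[x_1,\dots,x_n]$, $\widehat S=\bigcup_{r\ge0}\mathbb{F}_q[x_1^{q^{-r}},\dots,x_n^{q^{-r}}]$, $\varphi(u)=u^q$ the Frobenius automorphism of $\widehat S$. For a subspace $W\subset S$ of dimension $k$ with basis $w_1,\dots,w_k$ and strictly decreasing nonnegative integers $\alpha_1>\dots>\alpha_k$, $A_\alpha(W)=\det(w_i^{q^{\alpha_j}})_{i,j}$; for a partition $\lambda$ with at most $k$ nonzero parts, $S_\lambda(W)=A_{\lambda+\delta_k}(W)/A_{\delta_k}(W)$, $\delta_k=(k-1,\dots,0)$. $E_r(W)=S_{(1^r)}(W)$ for $0\le r\le k$, $E_r(W)=0$ otherwise (so for $\dim W=1$ with basis $w$, $E_1(W)=w^{q-1}$). For partitions $\lambda,\mu$ with $N=\max\{\ell(\lambda),\ell(\mu)\}$ ($\ell$ = number of nonzero parts), $T_{\lambda/\mu}(W)=\det\big((-1)^{\lambda_i-\mu_j-i+j}\varphi^{\lambda_i-i}E_{\lambda_i-\mu_j-i+j}(W)\big)_{1\le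 i,j\le N}$. $\mu\subseteq\lambda$ means $\mu_i\le\lambda_i$ for all $i$; the skew diagram $\lambda/\mu$ is the set of boxes $(i,j)$ with $\mu_i<j\le\lambda_i$; it is a vertical strip if no two of its boxes lie in the same row, i.e. $0\le\lambda_i-\mu_i\le1$ for all $i$. *)

(* Defs.v *)
From HB Require Import structures.
From mathcomp Require Import all_boot all_order all_algebra.
From mathcomp Require Import mpoly.
Set Implicit Arguments. Unset Strict Implicit. Unset Printing Implicit Defensive.
Import Order.TTheory GRing.Theory Num.Theory.
Local Open Scope ring_scope.

Definition phiz (R : Type) (phi psi : R -> R) (k : int) (x : R) : R :=
  match k with
  | Posz m => iter m phi x
  | Negz m => iter m.+1 psi x
  end.

(* Hypotheses characterizing (R, incl, phi, psi) as the perfect closure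
   \hat S = \bigcup_r F_q[x^{q^{-r}}] of S, with phi = Frobenius u |-> u^q
   and psi its inverse, and incl the inclusion S \subset \hat S. *)
Definition is_perfection (q : nat) (S R : comNzRingType)
  (incl : {rmorphism S -> R}) (phi : {rmorphism R -> R}) (psi : R -> R) : Prop :=
  [/\ injective incl,
      forall u : R, phi u = u ^+ q,
      cancel phi psi, cancel psi phi
    & forall u : R, exists r : nat, exists f : S, u = iter r psi (incl f)].

(* E_r(W) for the one-dimensional space W = F_q w: with k = 1, delta_1 = (0),
   A_(a)(W) = w^(q^a), so E_0(W) = A_(0)/A_(0) = 1, E_1(W) = A_(1)/A_(0)
   = w^(q-1), and E_r(W) = 0 for every other integer r. *)
Definition E_dim1 (q : nat) (S : comNzRingType) (w : S) (r : int) : S :=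
  if r == 0 then 1 else if r == 1 then w ^+ q.-1 else 0.

(* Partitions: nonincreasing sequences of positive integers; lambda_i
   (1-based) is nth 0 la (i-1), which is 0 beyond the length. *)
Definition is_partition (la : seq nat) : bool :=
  sorted geq la && all (fun x => 0 < x)%N la.

Definition sgn_int (R : nzRingType) (z : int) : R := (-1) ^+ `|z|%N.

(* The matrix of T_{lambda/mu}(W), dim W = 1, indices 0-based (i = row-1). *)
Definition T_matrix (q : nat) (S R : comNzRingType) (incl : S -> R)
  (phi psi : R -> R) (w : S) (la mu : seq nat) :
  'M[R]_(maxn (size la) (size mu)) :=
  \matrix_(i, j)
    let r : int := (nth 0%N la i)%:Z - (nth 0%N mu j)%:Z - (i.+1)%:Z + (j.+1)%:Z in
    sgn_int R r *
    phiz phi psi ((nth 0%N la i)%:Z - (i.+1)%:Z) (incl (E_dim1 q w r)).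

Definition T_skew (q : nat) (S R : comNzRingType) (incl : S -> R)
  (phi psi : R -> R) (w : S) (la mu : seq nat) : R :=
  \det (T_matrix q incl phi psi w la mu).

(* mu \subseteq lambda : mu_i <= lambda_i for all i (checked up to the larger
   length; beyond it both parts are 0). *)
Definition subpart (mu la : seq nat) : bool :=
  [forall i : 'I_(maxn (size la) (size mu)), nth 0 mu i <= nth 0 la i]%N.

Definition vertical_strip (la mu : seq nat) : bool :=
  [forall i : 'I_(maxn (size la) (size mu)), nth 0 la i - nth 0 mu i <= 1]%N.

(* Main.v *)
Require Import Defs.
From HB Require Import structures.
From mathcomp Require Import all_boot all_order all_algebra.
From mathcomp Require Import mpoly.
From mathcomp Require Import fingroup perm zify.
Import Order.TTheory GRing.Theory Num.Theory.
Local Open Scope ring_scope.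

Lemma phiz_const {R : nzRingType} (phi : {rmorphism R -> R}) (psi : R -> R)
  (Hc : cancel phi psi) k : phiz phi psi k 0 = 0 /\ phiz phi psi k 1 = 1.
Proof.
have p0 : psi 0 = 0 by rewrite -{1}(rmorph0 phi) Hc.
have p1 : psi 1 = 1 by rewrite -{1}(rmorph1 phi) Hc.
case: k => m /=.
  by split; elim: m => //= m ->; rewrite ?rmorph0 ?rmorph1.
by split; elim: m => [|m IH] /=; rewrite ?IH ?p0 ?p1.
Qed.

Lemma T_entry q (S R : comNzRingType) (incl : {rmorphism S -> R})
  (phi : {rmorphism R -> R}) psi (Hc : cancel phi psi) (w : S) la mu i j :
  T_matrix q incl phi psi w la mu i j =
  if (nth 0%N la i)%:Z - (nth 0%N mu j)%:Z - (i.+1)%:Z + (j.+1)%:Z == 0 then 1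
  else if (nth 0%N la i)%:Z - (nth 0%N mu j)%:Z - (i.+1)%:Z + (j.+1)%:Z == 1 then
    - phiz phi psi ((nth 0%N la i)%:Z - (i.+1)%:Z) (incl (E_dim1 q w 1))
  else 0.
Proof.
rewrite mxE /=.
set r := (_ + _)%R.
have [H0 H1] := phiz_const phi psi Hc ((nth 0%N la i)%:Z - (i.+1)%:Z).
rewrite /E_dim1 /sgn_int.
case: (r =P 0) => [->|_]; first by rewrite rmorph1 H1 expr0 mulr1.
case: (r =P 1) => [->|_]; first by rewrite /= expr1 mulN1r.
by rewrite rmorph0 H0 mulr0.
Qed.

Lemma sorted_step (s : seq nat) (Hs : sorted geq s) i :
  (nth 0 s i.+1 <= nth 0 s i)%N.
Proof.
elim: s i Hs => [|x t IH] i Hs; first by rewrite !nth_nil.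
case: i => [|i] /=.
  by move: Hs; clear IH; case: t => //= y t /andP [].
by apply: IH; apply: path_sorted Hs.
Qed.

Lemma sorted_mono (s : seq nat) (Hs : sorted geq s) i k :
  (i <= k)%N -> (nth 0 s k <= nth 0 s i)%N.
Proof.
move/subnKC => <-; elim: (k - i)%N => [|d IH]; first by rewrite addn0.
rewrite addnS; have := sorted_step s Hs (i + d); lia.
Qed.

Lemma perm_noinv N (s : 'S_N) :
  (forall i k : 'I_N, (i < k)%N -> (s k < s i)%N -> False) -> s = 1%g.
Proof.
move=> Hinv; apply/permP => i; rewrite perm1.
suff H : forall m (i : 'I_N), (i < m)%N -> s i = i by apply: (H i.+1).
elim => [//|m IH] {}i Him.
case: (ltnP i m) => [|him]; first exact: IH.
have ei : nat_of_ord i = m by lia.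
case: (ltngtP (s i) i) => [lt|gt|eq]; last by apply: val_inj.
- have sIi : (s i < m)%N by rewrite -ei.
  have := IH (s i) sIi.
  by move/perm_inj => e; rewrite e ltnn in lt.
- exfalso; set k := (s^-1)%g i.
  have sk : s k = i by rewrite /k permKV.
  case: (ltngtP k i) => [lk|gk|ek].
  + have kIi : (k < m)%N by rewrite -ei.
    have := IH k kIi; rewrite sk => e.
    by rewrite e ltnn in lk.
  + by apply: (Hinv i k gk); rewrite sk.
  + have : k = i by apply: val_inj.
    by move=> e; move: gt; rewrite -{1}sk e ltnn.
Qed.

Lemma sumn_ext (s : seq nat) N : (size s <= N)%N ->
  sumn s = (\sum_(i < N) nth 0 s i)%N.
Proof.
move=> HN; rewrite sumnE (big_nth 0) -(big_mkord xpredT (fun i => nth 0 s i)).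
rewrite (big_cat_nat (leq0n _) HN) /=.
rewrite [X in (_ + X)%N]big_nat_cond [X in (_ + X)%N]big1 ?addn0 // => i /andP [/andP [hi _] _].
by rewrite nth_default.
Qed.

Lemma if_e0 (R : nzRingType) (e : int) (x : R) :
  e = 0 -> (if e == 0 then 1 else if e == 1 then x else 0) = 1.
Proof. by move=> ->. Qed.

Lemma if_e1 (R : nzRingType) (e : int) (x : R) :
  e = 1 -> (if e == 0 then 1 else if e == 1 then x else 0) = x.
Proof. by move=> ->. Qed.

Lemma if_e2 (R : nzRingType) (e : int) (x : R) :
  e <> 0 -> e <> 1 -> (if e == 0 then 1 else if e == 1 then x else 0) = 0.
Proof. by move=> /eqP/negbTE -> /eqP/negbTE ->. Qed.

Lemma nz_cases (R : nzRingType) (e : int) (x : R) :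
  (if e == 0 then 1 else if e == 1 then x else 0) != 0 -> e = 0 \/ e = 1.
Proof.
case: (e =P 0) => [-> _|_]; first by left.
case: (e =P 1) => [-> _|_]; first by right.
by rewrite eqxx.
Qed.

Definition Xf (R : comNzRingType) (phi psi : R -> R) (c : R) (la mu : seq nat)
  (i : nat) : R :=
  \prod_((nth 0%N mu i).+1 <= j < (nth 0%N la i).+1)
     phiz phi psi (j%:Z - (i.+1)%:Z) c.

Theorem mainTheorem4 (F : finFieldType) (n : nat)
  (R : comNzRingType) (incl : {rmorphism {mpoly F[n]} -> R})
  (phi : {rmorphism R -> R}) (psi : R -> R)
  (Hperf : is_perfection #|F| incl phi psi)
  (w : {mpoly F[n]}) (Hw : w != 0)
  (la mu : seq nat) (Hla : is_partition la) (Hmu : is_partition mu) :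
  T_skew #|F| incl phi psi w la mu =
  (if subpart mu la && vertical_strip la mu then
     (-1) ^+ (sumn la - sumn mu) *
     \prod_(i < size la)
       \prod_((nth 0 mu i).+1 <= j < (nth 0 la i).+1)
         phiz phi psi (j%:Z - (i.+1)%:Z) (incl (E_dim1 #|F| w 1))
   else 0).
Proof.
case: Hperf => _ _ Hc _ _.
move: Hla Hmu => /andP [sla _] /andP [smu _].
rewrite /T_skew.
set M := T_matrix _ _ _ _ _ _ _.
have HM := T_entry #|F| _ _ incl phi psi Hc w la mu.
pose Xi := @Xf R phi psi (incl (E_dim1 #|F| w 1)) la mu.
have Hnz : forall i j : 'I_(maxn (size la) (size mu)), M i j != 0 ->
  ((nth 0%N la i)%:Z - (nth 0%N mu j)%:Z - (i.+1)%:Z + (j.+1)%:Z = 0 \/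
   (nth 0%N la i)%:Z - (nth 0%N mu j)%:Z - (i.+1)%:Z + (j.+1)%:Z = 1).
  by move=> i j; rewrite /M HM; apply: nz_cases.
have Hdet : \det M = \prod_i M i i.
  rewrite /determinant (bigD1 1%g) //= odd_perm1 expr0 mul1r.
  rewrite [X in _ + X]big1 ?addr0; first by apply: eq_bigr => i _; rewrite perm1.
  move=> s Hs.
  case: (boolP [forall i, M i (s i) != 0]) => [/forallP Hall | /forallPn [i Hi]].
    exfalso; move/eqP: Hs; apply; apply: perm_noinv => i k Hik Hsk.
    have h1 := Hnz _ _ (Hall i); have h2 := Hnz _ _ (Hall k).
    have m1 := sorted_mono la sla _ _ (ltnW Hik).
    have m2 := sorted_mono mu smu _ _ (ltnW Hsk).
    lia.
  by rewrite (bigD1 i) //= (eqP (negbNE Hi)) mul0r mulr0.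
rewrite Hdet /subpart /vertical_strip.
case: ifP => Hcond.
  move/andP: Hcond => [/forallP Hsub /forallP Hv].
  have Hd : forall i : 'I_(maxn (size la) (size mu)),
      M i i = (-1) ^+ (nth 0%N la i - nth 0%N mu i)%N * Xi i.
    move=> i; rewrite /M HM /Xi /Xf.
    have hs := Hsub i; have hv := Hv i.
    case: (ltngtP (nth 0%N la i) (nth 0%N mu i)) => h.
    - exfalso; lia.
    - rewrite if_e1; last by lia.
      have e : nth 0%N la i = (nth 0%N mu i).+1 by lia.
      by rewrite e subSnn expr1 big_nat1 mulN1r.
    - rewrite if_e0; last by lia.
      by rewrite h subnn expr0 mul1r big_geq.
  rewrite (eq_bigr _ (fun i _ => Hd i)) big_split prodrXr.
  congr (_ ^+ _ * _).
    rewrite (sumn_ext _ _ (leq_maxl (size la) (size mu))).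
    rewrite (sumn_ext _ _ (leq_maxr (size la) (size mu))).
    have -> : (\sum_(i < maxn (size la) (size mu)) nth 0%N la i =
        \sum_(i < maxn (size la) (size mu)) (nth 0%N la i - nth 0%N mu i) +
        \sum_(i < maxn (size la) (size mu)) nth 0%N mu i)%N.
      rewrite -big_split; apply: eq_bigr => i _.
      by symmetry; apply: subnK; apply: Hsub.
    by rewrite addnK.
  have HX : \prod_(i < maxn (size la) (size mu)) Xi i = \prod_(i < size la) Xi i.
    rewrite -(big_mkord xpredT Xi) -(big_mkord xpredT Xi).
    rewrite (big_cat_nat (leq0n _) (leq_maxl (size la) (size mu))) /=.
    rewrite [X in _ * X]big_nat_cond [X in _ * X]big1 ?mulr1 // => i /andP [/andP [hi _] _].
    by rewrite /Xi /Xf (@nth_default _ 0%N la i hi) big_geq ?ltn0Sn.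
  rewrite HX; exact: erefl.
move/negbT: Hcond; rewrite negb_and => /orP [] /forallPn [i Hi];
  rewrite -ltnNge in Hi; rewrite (bigD1 i) // /M HM if_e2 /= ?mul0r //; lia.
Qed.
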